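(* Let $\varphi\in\mathrm{End}_K(P_n)$. Then the following are equivalent: (1) $\varphi\in\mathbb{S}_n$; (2) $[x_i,\varphi]\in\mathfrak{p}_i$ for all $i=1,\dots,n$; (3) for each $i=1,\dots,n$ there exist $a_i,b_i\in\mathfrak{p}_i$ with $x_i\varphi=\varphi(x_i+a_i)+b_i$.
   Context: $K$ is a field of characteristic zero. $\mathbb{S}_n$ is the $K$-algebra generated by $x_1,\dots,x_n,y_1,\dots,y_n$ with defining relations $y_ix_i=1$ and $[x_i,y_j]=[x_i,x_j]=[y_i,y_j]=0$ for $i\ne j$. $\mathbb{S}_n$ acts faithfully on $P_n=K[x_1,\dots,x_n]$ by $x_i*x^\alpha=x^{\alpha+e_i}$, $y_i*x^\alpha=x^{\alpha-e_i}$ if $\alpha_i>0$ and $0$ otherwise; thus $\mathbb{S}_n\subset\mathrm{End}_K(P_n)$ and all products/commutators are taken in $\mathrm{End}_K(P_n)$. For $k,l\in\mathbb{N}$, $E_{kl}(i):=x_i^ky_i^l-x_i^{k+1}y_i^{l+1}$, $F(i)=\bigoplus_{k,l}KE_{kl}(i)$, and $\mathfrak{p}_i:=F(i)\otimes\bigotimes_{j\ne i}\mathbb{S}_1(j)\subset\mathbb{S}_n=\bigotimes_j\mathbb{S}_1(j)$ (the ideal generated by $1-x_iy_i$). *)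

(* Defs.v *)
From HB Require Import structures.
From mathcomp Require Import all_boot all_order all_algebra.
Set Implicit Arguments. Unset Strict Implicit. Unset Printing Implicit Defensive.
Import GRing.Theory.
Local Open Scope ring_scope.

Section Jacobson.
Variables (K : fieldType) (n : nat).

(* multi-indices alpha in N^n (variables indexed by 'I_n, i.e. x_1..x_n ~ 0..n-1) *)
Definition mind := {ffun 'I_n -> nat}.
Definition incr (i : 'I_n) (a : mind) : mind := [ffun j => a j + (j == i)]%N.
Definition decr (i : 'I_n) (a : mind) : mind := [ffun j => a j - (j == i)]%N.

(* polynomial = finitely supported coefficient function alpha |-> coeff of x^alpha *)
Definition finsupp (f : mind -> K) : Prop :=
  exists s : seq mind, forall a, f a != 0 -> a \in s.

Definition Pn := { f : mind -> K | finsupp f }.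
Definition coef (p : Pn) : mind -> K := proj1_sig p.

Lemma zero_fs : finsupp (fun _ => 0).
Proof. by exists [::] => a; rewrite eqxx. Qed.
Definition Pzero : Pn := exist _ _ zero_fs.

Lemma add_fs (p q : Pn) : finsupp (fun a => coef p a + coef q a).
Proof.
case: p q => [f [s Hs]] [g [t Ht]]; rewrite /finsupp /coef /=; exists (s ++ t) => a Ha.
rewrite mem_cat; case: (boolP (f a == 0)) => [/eqP fa0|/Hs -> //].
by rewrite Ht ?orbT //; move: Ha; rewrite fa0 add0r.
Qed.
Definition Padd (p q : Pn) : Pn := exist _ _ (add_fs p q).

Lemma scale_fs (c : K) (p : Pn) : finsupp (fun a => c * coef p a).
Proof.
case: p => [f [s Hs]]; rewrite /finsupp /coef /=; exists s => a Ha; apply: Hs.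
by apply: contraNneq Ha => ->; rewrite mulr0.
Qed.
Definition Pscale (c : K) (p : Pn) : Pn := exist _ _ (scale_fs c p).

Lemma incr_decr (i : 'I_n) (a : mind) : (0 < a i)%N -> incr i (decr i a) = a.
Proof.
move=> Ha; apply/ffunP => j; rewrite !ffunE.
by case: eqP => [->|_]; rewrite ?subnK ?subn0 ?addn0.
Qed.
Lemma decr_incr (i : 'I_n) (a : mind) : decr i (incr i a) = a.
Proof. by apply/ffunP => j; rewrite !ffunE addnK. Qed.

(* x_i * x^alpha = x^(alpha + e_i) *)
Definition xcoef (i : 'I_n) (p : Pn) (a : mind) : K :=
  if (0 < a i)%N then coef p (decr i a) else 0.
Lemma x_fs (i : 'I_n) (p : Pn) : finsupp (xcoef i p).
Proof.
case: p => [f [s Hs]]; rewrite /finsupp /coef /=; exists (map (incr i) s) => a; rewrite /xcoef /=.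
case: ifP => [Hai Hf|]; last by rewrite eqxx.
by rewrite -(incr_decr Hai); apply: map_f; apply: Hs.
Qed.
Definition opx (i : 'I_n) (p : Pn) : Pn := exist _ _ (x_fs i p).

(* y_i * x^alpha = x^(alpha - e_i) if alpha_i > 0, and 0 otherwise *)
Lemma y_fs (i : 'I_n) (p : Pn) : finsupp (fun a => coef p (incr i a)).
Proof.
case: p => [f [s Hs]]; rewrite /finsupp /coef /=; exists (map (decr i) s) => a /= Hf.
by rewrite -(decr_incr i a); apply: map_f; apply: Hs.
Qed.
Definition opy (i : 'I_n) (p : Pn) : Pn := exist _ _ (y_fs i p).

Definition Op := Pn -> Pn.
Definition linear_op (phi : Op) : Prop :=
  forall (c : K) (p q : Pn), phi (Padd (Pscale c p) q) = Padd (Pscale c (phi p)) (phi q).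
Definition op_id : Op := fun p => p.
Definition op_add (u v : Op) : Op := fun p => Padd (u p) (v p).
Definition op_scale (c : K) (u : Op) : Op := fun p => Pscale c (u p).
Definition op_sub (u v : Op) : Op := op_add u (op_scale (-1) v).
Definition op_mul (u v : Op) : Op := fun p => u (v p).
Definition op_comm (u v : Op) : Op := op_sub (op_mul u v) (op_mul v u).

(* S_n = the K-subalgebra of End_K(P_n) generated by the x_i, y_i
   (the image of the faithful action of the Jacobson algebra) *)
Inductive inS : Op -> Prop :=
| inS_x i : inS (opx i)
| inS_y i : inS (opy i)
| inS_1 : inS op_id
| inS_add u v : inS u -> inS v -> inS (op_add u v)
| inS_scale c u : inS u -> inS (op_scale c u)
| inS_mul u v : inS u -> inS v -> inS (op_mul u v).

Inductive inP (i : 'I_n) : Op -> Prop :=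
| inP_gen : inP i (op_sub op_id (op_mul (opx i) (opy i)))
| inP_add u v : inP i u -> inP i v -> inP i (op_add u v)
| inP_scale c u : inP i u -> inP i (op_scale c u)
| inP_lmul u v : inS u -> inP i v -> inP i (op_mul u v)
| inP_rmul u v : inP i u -> inS v -> inP i (op_mul u v).

End Jacobson.

(* Main.v *)
Require Import Defs.
From HB Require Import structures.
From mathcomp Require Import all_boot all_order all_algebra.
From Stdlib Require Import FunctionalExtensionality ProofIrrelevance.
Set Implicit Arguments. Unset Strict Implicit. Unset Printing Implicit Defensive.
Import GRing.Theory.
Local Open Scope ring_scope.

Section Work.
Variables (K : fieldType) (n : nat).
Implicit Types (p q : Pn K n) (u v : Op K n) (a b g : mind n).

Lemma Pn_ext p q : coef p =1 coef q -> p = q.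
Proof.
case: p q => f Hf [g Hg] /= H.
have E : f = g by apply: functional_extensionality.
subst; f_equal; apply: proof_irrelevance.
Qed.

Lemma op_ext u v : (forall p, u p = v p) -> u = v.
Proof. by move=> H; apply: functional_extensionality. Qed.

Lemma coefD p q a : coef (Padd p q) a = coef p a + coef q a. Proof. by []. Qed.
Lemma coefZ c p a : coef (Pscale c p) a = c * coef p a. Proof. by []. Qed.
Lemma coefX i p a : coef (opx i p) a = if (0 < a i)%N then coef p (decr i a) else 0.
Proof. by []. Qed.
Lemma coefY i p a : coef (opy i p) a = coef p (incr i a). Proof. by []. Qed.
Lemma coef0 a : coef (Pzero K n) a = 0. Proof. by []. Qed.

Definition coefE := (coefD, coefZ, coefX, coefY, coef0).

Lemma mon_fs a : finsupp (fun b => if b == a then (1 : K) else 0).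
Proof. by exists [:: a] => b; rewrite inE; case: (b == a); rewrite ?eqxx. Qed.
Definition mon a : Pn K n := exist _ _ (mon_fs a).
Lemma coefM a b : coef (mon a) b = if b == a then 1 else 0. Proof. by []. Qed.

Lemma incrE i a j : incr i a j = (a j + (j == i))%N. Proof. by rewrite ffunE. Qed.
Lemma decrE i a j : decr i a j = (a j - (j == i))%N. Proof. by rewrite ffunE. Qed.

Lemma lin0 u : linear_op u -> u (Pzero K n) = Pzero K n.
Proof.
move=> Hu; have := Hu (-1) (Pzero K n) (Pzero K n).
have -> : Padd (Pscale (-1) (Pzero K n)) (Pzero K n) = Pzero K n.
  by apply: Pn_ext => a; rewrite !coefE mulr0 addr0.
move=> E; apply: Pn_ext => a; rewrite E coefD coefZ mulN1r addNr; by [].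
Qed.

Lemma linD u p q : linear_op u -> u (Padd p q) = Padd (u p) (u q).
Proof.
move=> Hu; have := Hu 1 p q.
have -> : Padd (Pscale 1 p) q = Padd p q by apply: Pn_ext => a; rewrite !coefE mul1r.
move=> ->; apply: Pn_ext => a; by rewrite !coefE mul1r.
Qed.

Lemma linZ u c p : linear_op u -> u (Pscale c p) = Pscale c (u p).
Proof.
move=> Hu; have := Hu c p (Pzero K n).
have -> : Padd (Pscale c p) (Pzero K n) = Pscale c p by apply: Pn_ext => a; rewrite !coefE addr0.
move=> ->; rewrite lin0 //; apply: Pn_ext => a; by rewrite !coefE addr0.
Qed.

Lemma inS_lin u : inS u -> linear_op u.
Proof.
elim=> {u} [i|i||u v _ Hu _ Hv|d u _ Hu|u v _ Hu _ Hv] c p q; apply: Pn_ext => a.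
- rewrite !coefE; by case: ifP; rewrite ?mulr0 ?addr0.
- by rewrite !coefE.
- by [].
- rewrite /op_add Hu Hv !coefE. rewrite mulrDr; by rewrite addrACA.
- rewrite /op_scale Hu !coefE; by rewrite mulrDr !mulrA [d * c]mulrC.
- by rewrite /op_mul Hv Hu.
Qed.

Lemma lin_ext u v : linear_op u -> linear_op v ->
  (forall a, u (mon a) = v (mon a)) -> forall p, u p = v p.
Proof.
move=> Hu Hv H p; case: (proj2_sig p) => s; rewrite -/(coef p).
elim: s p => [|a0 s IH] p Hs.
  have -> : p = Pzero K n.
    apply: Pn_ext => a; rewrite coef0; apply/eqP; apply: contraT => /Hs.
    by rewrite in_nil.
  by rewrite !lin0.
have fs : finsupp (fun b => if b == a0 then 0 else coef p b).
  exists s => b; case: (b =P a0) => [_|Nb]; first by rewrite eqxx.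
  by move/Hs; rewrite inE; case: (b =P a0).
pose p' : Pn K n := exist _ _ fs.
have -> : p = Padd (Pscale (coef p a0) (mon a0)) p'.
  apply: Pn_ext => a; rewrite !coefE coefM /coef /=.
  by case: eqP => [->|_]; rewrite ?mulr1 ?addr0 ?mulr0 ?add0r.
rewrite !linD // !linZ // H IH //.
move=> b; rewrite /coef /=; case: (b =P a0) => [_|Nb]; first by rewrite eqxx.
by move/Hs; rewrite inE; case: (b =P a0).
Qed.

Definition gen i : Op K n := op_sub (@op_id K n) (op_mul (opx i) (opy i)).

Lemma opE :
  (forall u v p, op_add u v p = Padd (u p) (v p)) *
  (forall c u p, op_scale c u p = Pscale c (u p)) *
  (forall u v p, op_mul u v p = u (v p)) *
  (forall u v p, op_sub u v p = Padd (u p) (Pscale (-1) (v p))) *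
  (forall u v p, op_comm u v p = Padd (u (v p)) (Pscale (-1) (v (u p)))) *
  (forall p, @op_id K n p = p).
Proof. by []. Qed.

Lemma decrC i j a : decr i (decr j a) = decr j (decr i a).
Proof. by apply/ffunP => k; rewrite !decrE subnAC. Qed.

Lemma decr_neq i j a : i != j -> decr i a j = a j.
Proof. by move=> Nij; rewrite decrE eq_sym (negbTE Nij) subn0. Qed.
Lemma incr_neq i j a : i != j -> incr i a j = a j.
Proof. by move=> Nij; rewrite incrE eq_sym (negbTE Nij) addn0. Qed.
Lemma decr_incrC i j a : i != j -> decr i (incr j a) = incr j (decr i a).
Proof.
move=> Nij; apply/ffunP => k; rewrite !decrE !incrE decrE.
case E: (k == i) => /=; last by rewrite !subn0.
move/eqP: E => ->; case E: (i == j); first by rewrite (eqP E) eqxx in Nij.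
by rewrite /= !addn0.
Qed.

Lemma inP_zero i : inP i (op_scale 0 (gen i)).
Proof. by apply: inP_scale; apply: inP_gen. Qed.

Lemma comm_S i u : inS u -> inP i (op_comm (opx i) u).
Proof.
elim=> {u} [j|j||u v Su Hu Sv Hv|d u Su Hu|u v Su Hu Sv Hv].
- suff -> : op_comm (opx i) (opx j) = op_scale 0 (gen i) by apply: inP_zero.
  apply: op_ext => p; apply: Pn_ext => a; rewrite !opE !coefE mul0r.
  case: (eqVneq i j) => [<-|Nij]; first by rewrite mulN1r subrr.
  have Nji : j != i by rewrite eq_sym.
  rewrite (decr_neq _ Nij) (decr_neq _ Nji).
  rewrite decrC; case: ifP; case: ifP; by rewrite ?mulr0 ?addr0 ?mulN1r ?subrr.
- case: (eqVneq i j) => [Eij|Nij].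
    subst j.
    suff -> : op_comm (opx i) (opy i) = op_scale (-1) (gen i) by apply: inP_scale; apply: inP_gen.
    apply: op_ext => p; apply: Pn_ext => a; rewrite !opE /gen !opE !coefE.
    rewrite incrE eqxx addn1 /= decr_incr mulrDr !mulN1r opprK addrC.
    by case: ifP => // Ha; rewrite incr_decr.
  suff -> : op_comm (opx i) (opy j) = op_scale 0 (gen i) by apply: inP_zero.
  apply: op_ext => p; apply: Pn_ext => a; rewrite !opE !coefE mul0r.
  rewrite incr_neq 1?eq_sym // decr_incrC //.
  by case: ifP; rewrite ?mulr0 ?addr0 ?mulN1r ?subrr.
- suff -> : op_comm (opx i) (@op_id K n) = op_scale 0 (gen i) by apply: inP_zero.
  apply: op_ext => p; apply: Pn_ext => a; rewrite !opE !coefE mul0r.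
  by rewrite mulN1r subrr.
- suff -> : op_comm (opx i) (op_add u v) = op_add (op_comm (opx i) u) (op_comm (opx i) v).
    by apply: inP_add.
  apply: op_ext => p; apply: Pn_ext => a; rewrite !opE !coefE.
  case: ifP => _; first by rewrite mulrDr addrACA.
  by rewrite !add0r mulrDr.
- suff -> : op_comm (opx i) (op_scale d u) = op_scale d (op_comm (opx i) u).
    by apply: inP_scale.
  apply: op_ext => p; apply: Pn_ext => a; rewrite !opE !coefE.
  rewrite mulrDr !mulN1r mulrN; by case: ifP; rewrite ?mulr0.
- suff -> : op_comm (opx i) (op_mul u v) =
      op_add (op_mul (op_comm (opx i) u) v) (op_mul u (op_comm (opx i) v)).
    by apply: inP_add; [apply: inP_rmul | apply: inP_lmul].
  apply: op_ext => p; apply: Pn_ext => a.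
  have Lu := inS_lin Su.
  rewrite !opE (linD _ _ Lu) (linZ _ _ Lu) !coefE !mulN1r.
  by rewrite addrA addrNK.

Qed.

Lemma two_three i phi : inP i (op_comm (opx i) phi) ->
  exists a b : Op K n, inP i a /\ inP i b /\
      op_mul (opx i) phi = op_add (op_mul phi (op_add (opx i) a)) b.
Proof.
move=> H; exists (op_scale 0 (gen i)), (op_comm (opx i) phi).
split; first exact: inP_zero; split => //.
apply: op_ext => p; rewrite !opE.
have -> : Padd (opx i p) (Pscale 0 (gen i p)) = opx i p.
  by apply: Pn_ext => a; rewrite !coefE mul0r addr0.
apply: Pn_ext => a; rewrite !coefE.
by rewrite addrCA mulN1r subrr addr0.
Qed.

Definition hi i N p := forall a, (a i < N)%N -> coef p a = 0.

Lemma hi_mono i N M p : (N <= M)%N -> hi i M p -> hi i N p.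
Proof. by move=> NM H a Ha; apply: H; apply: leq_trans NM. Qed.

Lemma S_hi i u : inS u -> exists M, forall N p, hi i (N + M) p -> hi i N (u p).
Proof.
elim=> {u} [j|j||u v Su [Mu Hu] Sv [Mv Hv]|d u Su [Mu Hu]|u v Su [Mu Hu] Sv [Mv Hv]].
- exists 0%N => N p; rewrite addn0 => H a Ha; rewrite coefE.
  case: ifP => // _; apply: H; rewrite decrE; exact: leq_ltn_trans (leq_subr _ _) Ha.
- exists 1%N => N p H a Ha; rewrite coefE; apply: H.
  rewrite incrE addn1 ltnS; apply: leq_trans _ Ha; by rewrite -addn1 leq_add2l leq_b1.
- by exists 0%N => N p; rewrite addn0.
- exists (maxn Mu Mv) => N p H a Ha; rewrite opE coefE.
  rewrite (Hu N) ?(Hv N) ?addr0 //; apply: hi_mono H;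
    by rewrite leq_add2l ?leq_maxl ?leq_maxr.
- exists Mu => N p H a Ha; by rewrite opE coefE (Hu N) ?mulr0.
- exists (Mu + Mv)%N => N p H; rewrite opE; apply: Hu; apply: Hv.
  by rewrite -addnA.
Qed.

Lemma P_hi i u : inP i u -> exists N, forall p, hi i N p -> u p = Pzero K n.
Proof.
elim=> {u} [|u v _ [Nu Hu] _ [Nv Hv]|c u _ [Nu Hu]|u v Su _ [Nv Hv]|u v _ [Nu Hu] Sv].
- exists 1%N => p H; apply: Pn_ext => a; rewrite !opE !coefE.
  case: ifP => [Ha|]; first by rewrite incr_decr // mulN1r subrr.
  by move/negbT; rewrite -leqNgt => /H ->; rewrite mulr0 addr0.
- exists (maxn Nu Nv) => p H; rewrite opE Hu ?Hv; last 2 first.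
  + by apply: hi_mono H; rewrite leq_maxr.
  + by apply: hi_mono H; rewrite leq_maxl.
  by apply: Pn_ext => a; rewrite !coefE addr0.
- exists Nu => p H; rewrite opE Hu //; by apply: Pn_ext => a; rewrite !coefE mulr0.
- exists Nv => p H; rewrite opE Hv //; exact: lin0 (inS_lin Su).
- have [M HM] := S_hi i Sv.
  exists (Nu + M)%N => p H; rewrite opE; apply: Hu; exact: HM.
Qed.

Definition mle a b := [forall j, (a j <= b j)%N].
Definition msub a b : mind n := [ffun j => (a j - b j)%N].
Definition madd a b : mind n := [ffun j => (a j + b j)%N].
Definition mmin a N : mind n := [ffun j => minn (a j) N].
Definition ms a := (\sum_j a j)%N.

Lemma mleP a b : reflect (forall j, a j <= b j)%N (mle a b).
Proof. exact: forallP. Qed.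

Lemma shift_step j al a :
  ((0 < a j)%N && mle al (decr j a)) = mle (incr j al) a /\
  msub (decr j a) al = msub a (incr j al).
Proof.
split; last first.
  by apply/ffunP => k; rewrite !ffunE -subnDA addnC.
apply/andP/mleP => [[Haj /mleP H] k|H].
  have := H k; rewrite decrE incrE; case E: (k == j) => /=; last by rewrite subn0 addn0.
  move/eqP: E => ->.
  by rewrite addn1 => Hk; rewrite -(subnK Haj) addn1 ltnS.
have Hj := H j; rewrite incrE eqxx addn1 in Hj.
split; first exact: leq_ltn_trans (leq0n _) Hj.
apply/mleP => k; have := H k; rewrite decrE incrE.
case E: (k == j) => /=; last by rewrite subn0 addn0.
move/eqP: E => ->.
by rewrite addn1 => Hk; rewrite leq_subRL ?add1n // (leq_ltn_trans (leq0n _) Hk).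
Qed.

Lemma ms_incr j a : ms (incr j a) = (ms a).+1.
Proof.
rewrite /ms (bigD1 j) //= [in RHS](bigD1 j) //= incrE eqxx addn1 addSn; congr _.+1.
by congr (_ + _)%N; apply: eq_bigr => k Nk; rewrite incrE (negbTE Nk) addn0.
Qed.

Lemma ms0 a : ms a = 0%N -> forall j, a j = 0%N.
Proof. by move=> /eqP; rewrite /ms sum_nat_eq0 => /forallP H j; apply/eqP; apply: H. Qed.

Lemma ms_pos a : (0 < ms a)%N -> exists j, (0 < a j)%N.
Proof.
move=> H; apply/existsP; apply: contraTT H; rewrite negb_exists => /forallP H.
rewrite -leqNgt leqn0 /ms sum_nat_eq0; apply/forallP => j.
by have := H j; rewrite lt0n negbK.
Qed.

Lemma msub_eq x a y : (mle x a && (msub a x == y)) = (a == madd y x).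
Proof.
apply/andP/eqP => [[/mleP H /eqP <-]|->].
  by apply/ffunP => j; rewrite !ffunE subnK.
split; first by apply/mleP => j; rewrite ffunE leq_addl.
by apply/eqP/ffunP => j; rewrite !ffunE addnK.
Qed.

Lemma mle0 a : mle [ffun => 0%N] a.
Proof. by apply/mleP => j; rewrite ffunE. Qed.
Lemma msub0 a : msub a [ffun => 0%N] = a.
Proof. by apply/ffunP => j; rewrite !ffunE subn0. Qed.

Lemma L_shift al : exists u, inS u /\
  forall p a, coef (u p) a = if mle al a then coef p (msub a al) else 0.
Proof.
move Ek : (ms al) => k; elim: k al Ek => [|k IH] al Ek.
  have -> : al = [ffun => 0%N] by apply/ffunP => j; rewrite ffunE (ms0 Ek).
  by exists (@op_id K n); split; [apply: inS_1 | move=> p a; rewrite mle0 msub0].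
have [j Hj] : exists j, (0 < al j)%N by apply: ms_pos; rewrite Ek.
have E : al = incr j (decr j al) by rewrite incr_decr.
have [u [Su Hu]] := IH (decr j al) ltac:(by apply: succn_inj; rewrite -(ms_incr j) -E Ek).
exists (op_mul (opx j) u); split; first by apply: inS_mul => //; apply: inS_x.
move=> p a; have [S1 S2] := shift_step j (decr j al) a.
rewrite opE coefE E -S1 -S2.
by case: ifP => //= _; rewrite Hu.
Qed.

Lemma L_yshift be : exists u, inS u /\
  forall p a, coef (u p) a = coef p (madd a be).
Proof.
move Ek : (ms be) => k; elim: k be Ek => [|k IH] be Ek.
  exists (@op_id K n); split; first exact: inS_1.
  by move=> p a; congr coef; apply/ffunP => j; rewrite ffunE (ms0 Ek) addn0.
have [j Hj] : exists j, (0 < be j)%N by apply: ms_pos; rewrite Ek.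
have E : be = incr j (decr j be) by rewrite incr_decr.
have [u [Su Hu]] := IH (decr j be) ltac:(by apply: succn_inj; rewrite -(ms_incr j) -E Ek).
exists (op_mul u (opy j)); split; first by apply: inS_mul => //; apply: inS_y.
move=> p a; rewrite opE Hu coefE; congr coef.
by rewrite {2}E; apply/ffunP => l; rewrite !ffunE addnA.
Qed.

Lemma L_pr (s : seq 'I_n) : exists u, inS u /\
  forall p a, coef (u p) a = if all (fun j => a j == 0%N) s then coef p a else 0.
Proof.
elim: s => [|j s [u [Su Hu]]].
  by exists (@op_id K n); split; [apply: inS_1|].
exists (op_mul (gen j) u); split.
  apply: inS_mul => //; apply: inS_add; first exact: inS_1.
  by apply: inS_scale; apply: inS_mul; [apply: inS_x | apply: inS_y].
move=> p a; rewrite opE /gen !opE !coefE /= !Hu.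
rewrite lt0n; case Ej: (a j == 0%N) => /=; first by rewrite mulr0 addr0.
by rewrite incr_decr ?lt0n ?Ej // mulN1r subrr.
Qed.

Lemma maddC a b : madd a b = madd b a.
Proof. by apply/ffunP => j; rewrite !ffunE addnC. Qed.

Lemma L_mul q : exists M, inS M /\ forall d a,
  coef (M (mon d)) a = if mle d a then coef q (msub a d) else 0.
Proof.
case: (proj2_sig q) => s; rewrite -/(coef q).
elim: s q => [|a0 s IH] q Hs.
  exists (op_scale 0 (@op_id K n)); split; first by apply: inS_scale; apply: inS_1.
  move=> d a; rewrite !opE coefE mul0r.
  case: ifP => // _; apply/esym/eqP; apply: contraT => /Hs; by rewrite in_nil.
have fs : finsupp (fun b => if b == a0 then 0 else coef q b).
  exists s => b; case: (b =P a0) => [_|Nb]; first by rewrite eqxx.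
  by move/Hs; rewrite inE; case: (b =P a0).
pose q' : Pn K n := exist _ _ fs.
have [M' [SM' HM']] := IH q' ltac:(move=> b; rewrite /coef /=; case: (b =P a0) => [_|Nb];
  [by rewrite eqxx | by move/Hs; rewrite inE; case: (b =P a0)]).
have [u [Su Hu]] := L_shift a0.
exists (op_add (op_scale (coef q a0) u) M'); split.
  by apply: inS_add => //; apply: inS_scale.
move=> d a; rewrite !opE !coefE Hu HM' coefM /coef /= -/(coef q).
have X : (mle a0 a && (msub a a0 == d)) = (mle d a && (msub a d == a0)).
  by rewrite !msub_eq maddC.
rewrite [if mle a0 a then _ else _](_ : _ = if mle a0 a && (msub a a0 == d) then 1 else 0);
  last by case: (mle a0 a).
rewrite X; case: (mle d a) => /=; last by rewrite mulr0 addr0.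
case E: (msub a d == a0); first by rewrite (eqP E) mulr1 addr0.
by rewrite mulr0 add0r.
Qed.

Lemma L_T N (nu : mind n) : (forall j, nu j <= N)%N -> exists T, inS T /\ forall g,
  T (mon g) = if mmin g N == nu then mon (msub g nu) else Pzero K n.
Proof.
move=> Hnu.
have [pr [Spr Hpr]] := L_pr [seq j <- enum 'I_n | (nu j < N)%N].
have [Y [SY HY]] := L_yshift nu.
exists (op_mul pr Y); split; first exact: inS_mul.
move=> g; apply: Pn_ext => a; rewrite opE Hpr HY !coefM.
have X : (all (fun j => a j == 0%N) [seq j <- enum 'I_n | (nu j < N)%N] && (madd a nu == g))
    = ((mmin g N == nu) && (a == msub g nu)).
  apply/andP/andP => [[/allP Ha /eqP Eg]|[/eqP Em /eqP Ea]].
    have Ha' : forall j, (nu j < N)%N -> a j = 0%N.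
      by move=> j Hj; apply/eqP; apply: Ha; rewrite mem_filter Hj mem_enum.
    split; apply/eqP/ffunP => j; rewrite -Eg !ffunE; last by rewrite addnK.
    case: (ltnP (nu j) N) => Hj; first by rewrite Ha' // add0n; apply/minn_idPl/ltnW.
    have -> : nu j = N by apply/eqP; rewrite eqn_leq Hnu Hj.
    by apply/minn_idPr; rewrite leq_addl.
  have Hm : forall j, nu j = minn (g j) N by move=> j; rewrite -Em ffunE.
  split.
    apply/allP => j; rewrite mem_filter => /andP [Hj _].
    rewrite Ea ffunE Hm; move: Hj; rewrite Hm; case: (leqP N (g j)) => H //.
    by rewrite ltnn.
    by rewrite subnn.
  apply/eqP/ffunP => j; rewrite Ea !ffunE subnK // Hm geq_minl //.
rewrite [if all _ _ then _ else _](_ : _ = if (all (fun j => a j == 0%N)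
   [seq j <- enum 'I_n | (nu j < N)%N] && (madd a nu == g)) then 1 else 0);
  last by case: (all _ _).
rewrite X; case: (mmin g N == nu) => //=.
Qed.

Lemma mon_x j g : (0 < g j)%N -> mon g = opx j (mon (decr j g)).
Proof.
move=> Hg; apply: Pn_ext => a; rewrite coefE !coefM.
case E: (a == g).
  by rewrite (eqP E) Hg eqxx.
case: ifP => // Ha; case E2: (decr j a == decr j g) => //.
by rewrite -(incr_decr Ha) (eqP E2) incr_decr // eqxx in E.
Qed.

Lemma shift_phi (phi : Op K n) N : (forall i g, (N <= g i)%N -> phi (opx i (mon g)) = opx i (phi (mon g))) ->
  forall g a, coef (phi (mon g)) a =
    if mle (msub g (mmin g N)) a
    then coef (phi (mon (mmin g N))) (msub a (msub g (mmin g N))) else 0.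
Proof.
move=> Hsh g; move Ek : (ms (msub g (mmin g N))) => k.
elim: k g Ek => [|k IH] g Ek a.
  have Z := ms0 Ek.
  have D0 : msub g (mmin g N) = [ffun => 0%N] by apply/ffunP => j; rewrite Z ffunE.
  have Em : mmin g N = g.
    apply/ffunP => j; have := Z j; rewrite !ffunE => /eqP; rewrite subn_eq0 => H.
    by apply/eqP; rewrite eqn_leq geq_minl H.
  by rewrite D0 mle0 msub0 Em.
have [j Hj] : exists j, (0 < msub g (mmin g N) j)%N by apply: ms_pos; rewrite Ek.
move: Hj; rewrite ffunE subn_gt0 => Hj0.
have Hj : (N < g j)%N.
  move: Hj0; rewrite /mmin ffunE; case: (leqP (g j) N) => // H.
  by rewrite ltnn.
have Hg : (0 < g j)%N by apply: leq_ltn_trans (leq0n _) Hj.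
set g' := decr j g.
have Hg' : (N <= g' j)%N by rewrite /g' decrE eqxx; rewrite leq_subRL // add1n.
have Em : mmin g' N = mmin g N.
  apply/ffunP => l; rewrite !ffunE.
  case E: (l == j) => /=; last by rewrite subn0.
  move/eqP: E => ->; rewrite (minn_idPr (ltnW Hj)); apply/minn_idPr.
  by rewrite leq_subRL // add1n.
have ED : msub g (mmin g N) = incr j (msub g' (mmin g' N)).
  rewrite Em; apply/ffunP => l; rewrite /g' !ffunE.
  case E: (l == j) => /=; last by rewrite subn0 addn0.
  move/eqP: E => ->; rewrite addn1 subnAC subn1 prednK //.
  by rewrite subn_gt0 (minn_idPr (ltnW Hj)).
have Ek' : ms (msub g' (mmin g' N)) = k by apply: succn_inj; rewrite -(ms_incr j) -ED.
rewrite (mon_x Hg) Hsh // coefE.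
have [S1 S2] := shift_step j (msub g' (mmin g' N)) a.
rewrite ED -S1 -S2 -Em.
by case: ifP => //= _; rewrite IH.
Qed.

Lemma hi_mon i M g : (M <= g i)%N -> hi i M (mon g).
Proof.
move=> H a Ha; rewrite coefM; case E: (a == g) => //.
by move: Ha; rewrite (eqP E) ltnNge H.
Qed.

Definition box N : seq (mind n) :=
  [seq [ffun j => nat_of_ord (f j)] | f : {ffun 'I_n -> 'I_N.+1} <- enum {ffun 'I_n -> 'I_N.+1}].

Lemma box_mem g N : mmin g N \in box N.
Proof.
apply/mapP; exists [ffun j => (inord (minn (g j) N) : 'I_N.+1)]; first by rewrite mem_enum.
by apply/ffunP => j; rewrite !ffunE inordK // ltnS geq_minr.
Qed.

Lemma box_le N nu : nu \in box N -> forall j, (nu j <= N)%N.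
Proof. by case/mapP => f _ -> j; rewrite ffunE -ltnS ltn_ord. Qed.

Lemma key (phi : Op K n) N : linear_op phi ->
  (forall i g, (N <= g i)%N -> phi (opx i (mon g)) = opx i (phi (mon g))) -> inS phi.
Proof.
move=> Lphi Hsh.
have H : forall L : seq (mind n), (forall nu, nu \in L -> forall j, (nu j <= N)%N) ->
    exists psi, inS psi /\ forall g,
      psi (mon g) = if mmin g N \in L then phi (mon g) else Pzero K n.
  elim=> [|nu L IH] HL.
    exists (op_scale 0 (@op_id K n)); split; first by apply: inS_scale; apply: inS_1.
    by move=> g; apply: Pn_ext => a; rewrite !opE !coefE mul0r.
  have [psi [Spsi Hpsi]] := IH ltac:(move=> m Hm; apply: HL; by rewrite in_cons Hm orbT).
  case NL: (nu \in L).
    exists psi; split => // g; rewrite Hpsi in_cons.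
    by case E: (mmin g N == nu) => //=; rewrite (eqP E) NL.
  have [T [ST HT]] := L_T (HL nu (mem_head _ _)).
  have [M [SM HM]] := L_mul (phi (mon nu)).
  exists (op_add (op_mul M T) psi); split; first by apply: inS_add => //; apply: inS_mul.
  move=> g; rewrite !opE HT Hpsi in_cons.
  case E: (mmin g N == nu) => /=.
    rewrite (eqP E) NL; apply: Pn_ext => a; rewrite !coefE HM.
    by rewrite (shift_phi Hsh g a) (eqP E) addr0.
  rewrite (lin0 (inS_lin SM)); case: ifP => _; apply: Pn_ext => a; by rewrite !coefE add0r.
have [psi [Spsi Hpsi]] := H (box N) (@box_le N).
suff -> : phi = psi by [].
apply: op_ext; apply: lin_ext => // [|g]; first exact: inS_lin.
by rewrite Hpsi box_mem.
Qed.

End Work.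

Theorem theorem6p2 (K : fieldType) (n : nat) (charK0 : [pchar K] =i pred0)
    (phi : Op K n) (phi_lin : linear_op phi) :
  (inS phi <-> (forall i : 'I_n, inP i (op_comm (opx i) phi))) /\
  ((forall i : 'I_n, inP i (op_comm (opx i) phi)) <->
   (forall i : 'I_n, exists a b : Op K n, inP i a /\ inP i b /\
      op_mul (opx i) phi = op_add (op_mul phi (op_add (opx i) a)) b)).
Proof.
have C1 : (forall i : 'I_n, exists N, forall g : mind n, (N <= g i)%N ->
     phi (opx i (@mon K n g)) = opx i (phi (@mon K n g))) -> inS phi.
  move=> Hi; have [f Hf] := fin_all_exists Hi.
  apply: (@key _ _ phi (\max_i f i)) => // i g Hg; apply: Hf.
  exact: leq_trans (leq_bigmax i) Hg.
have C2 : (forall i : 'I_n, inP i (op_comm (opx i) phi)) -> inS phi.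
  move=> H; apply: C1 => i; have [N HN] := P_hi (H i).
  exists N => g Hg; have := HN _ (@hi_mon K _ _ _ _ Hg).
  move=> E; apply: Pn_ext => a.
  have E2 : coef (op_comm (opx i) phi (@mon K n g)) a = 0 by rewrite E.
  move: E2; rewrite !opE coefD coefZ mulN1r => /eqP; rewrite subr_eq0 => /eqP ->; by [].
split; first by split => [S i|]; [apply: comm_S | exact: C2].
split; first by move=> H i; apply: two_three.
move=> H; have : inS phi; last by move=> S i; apply: comm_S.
apply: C1 => i; have [a [b [Pa [Pb E]]]] := H i.
have [Na HNa] := P_hi Pa; have [Nb HNb] := P_hi Pb.
exists (maxn Na Nb) => g Hg.
have E' : op_mul (opx i) phi (@mon K n g) = op_add (op_mul phi (op_add (opx i) a)) b (@mon K n g).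
  by rewrite E.
move: E'; rewrite !opE.
rewrite HNa ?HNb; last 2 first.
- by apply: (@hi_mon K); apply: leq_trans Hg; rewrite leq_maxr.
- by apply: (@hi_mon K); apply: leq_trans Hg; rewrite leq_maxl.
move=> ->; apply: Pn_ext => x; rewrite coefD coef0 addr0.
congr coef; congr phi; apply: Pn_ext => y; by rewrite coefD coef0 addr0.
Qed.
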